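(* Let $0<p\leqslant q:=1-p$, and let $\tilde f(z)$ and $\tilde g(z)$ be entire functions satisfying \[ \tilde{f}(z)=(1-e^{-pz})\tilde{f}(pz) +e^{-pz}\tilde{f}(qz) +\tilde{g}(z), \] with $\tilde f(0)=\tilde g(0)=0$. If $\tilde g(x)=O(x^\alpha(\log_+x)^\beta)$ for real $x\to\infty$, where $\alpha,\beta\in\mathbb{R}$ and $\log_+x:=\log(1+x)$, then, as $x\to\infty$ along the reals, \[ \tilde{f}(x) = \begin{cases} O(x^{\alpha}(\log_+x)^\beta), & \text{if }\alpha>0;\\ O((\log_+x)^{\beta+1}), & \text{if }\alpha=0,\ \beta>-1;\\ O(\log_+ \log_+ x), & \text{if }\alpha=0,\ \beta=-1;\\ O(1), &\text{if }\alpha=0,\ \beta<-1;\\ O(1), &\text{if } \alpha<0. \end{cases} \] *)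

(* Defs.v *)
From Stdlib Require Import Reals.
From Coquelicot Require Import Coquelicot.
Open Scope R_scope.

Definition Cexp (z : C) : C :=
  (exp (Re z) * cos (Im z), exp (Re z) * sin (Im z)).

Definition entire (f : C -> C) : Prop :=
  forall z : C, @ex_derive C_AbsRing C_NormedModule f z.

Definition log_plus (x : R) : R := ln (1 + x).

Definition bigO_pinfty (u v : R -> R) : Prop :=
  exists K M : R, forall x : R, M <= x -> Rabs (u x) <= K * Rabs (v x).

(* Main.v *)
Require Import Defs.
From Stdlib Require Import Reals Lra Lia.
From Coquelicot Require Import Coquelicot.
Open Scope R_scope.

Lemma exp_le (x y : R) : x <= y -> exp x <= exp y.
Proof. intros [H|H]. apply Rlt_le, exp_increasing, H. subst; lra. Qed.
Lemma ln_le (x y : R) : 0 < x -> x <= y -> ln x <= ln y.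
Proof. intros Hx [H|H]. apply Rlt_le, ln_increasing; auto. subst; lra. Qed.
Lemma ln_le_sub1 (y : R) : 0 < y -> ln y <= y - 1.
Proof. intros Hy. pose proof (exp_ineq1_le (ln y)). rewrite exp_ln in H; lra. Qed.
Lemma ln_ratio_lb (u v : R) : 0 < v -> 0 < u -> (u - v) / u <= ln u - ln v.
Proof.
  intros Hv Hu. pose proof (ln_le_sub1 (v / u)) as H.
  assert (0 < v / u) by (apply Rdiv_lt_0_compat; auto).
  specialize (H H0). unfold Rdiv in H. rewrite ln_mult, ln_Rinv in H; auto.
  2: apply Rinv_0_lt_compat; auto.
  replace ((u - v)/u) with (1 - v * / u). lra. field. lra.
Qed.
Lemma ln_ratio_ub (u v : R) : 0 < v -> 0 < u -> ln u - ln v <= (u - v) / v.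
Proof.
  intros Hv Hu. pose proof (ln_ratio_lb v u Hu Hv). 
  replace ((u - v)/v) with (- ((v-u)/v)) by (field; lra). lra.
Qed.

Lemma ln_tangent (y k : R) : 0 < y -> 0 < k -> ln y <= y / k + ln k - 1.
Proof.
  intros Hy Hk. pose proof (ln_le_sub1 (y / k) ltac:(apply Rdiv_lt_0_compat; auto)).
  unfold Rdiv in *. rewrite ln_mult, ln_Rinv in H; auto. lra. apply Rinv_0_lt_compat; auto.
Qed.

Lemma L_nonneg (x : R) : 0 <= x -> 0 <= log_plus x.
Proof. intros. unfold log_plus. rewrite <- ln_1. apply ln_le; lra. Qed.
Lemma L_pos (x : R) : 0 < x -> 0 < log_plus x.
Proof. intros. unfold log_plus. rewrite <- ln_1. apply ln_increasing; lra. Qed.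
Lemma L_mono (x y : R) : 0 <= x -> x <= y -> log_plus x <= log_plus y.
Proof. intros. unfold log_plus. apply ln_le; lra. Qed.
Lemma L_large (x T : R) : exp T <= x -> T <= log_plus x.
Proof.
  intros H. unfold log_plus. rewrite <- (ln_exp T) at 1. apply ln_le. apply exp_pos.
  pose proof (exp_pos T). lra.
Qed.
Lemma L_le (x : R) : 0 <= x -> log_plus x <= x.
Proof. intros. unfold log_plus. pose proof (ln_le_sub1 (1 + x)). lra. Qed.

Lemma L_diff_ub (c x : R) : 0 < c <= 1 -> 0 <= x -> log_plus x - log_plus (c * x) <= - ln c.
Proof.
  intros Hc Hx. unfold log_plus.
  assert (H : ln (1 + x) <= ln ((1 + c * x) * / c)).
  { apply ln_le. lra. apply Rmult_le_reg_l with c. lra.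
    replace (c * ((1 + c * x) * / c)) with (1 + c * x) by (field; lra). nra. }
  rewrite ln_mult, ln_Rinv in H; try lra. nra. apply Rinv_0_lt_compat; lra.
Qed.

Lemma L_diff_lb (p x : R) : 0 < p < 1 -> 1 <= x -> (1 - p) / 2 <= log_plus x - log_plus (p * x).
Proof.
  intros Hp Hx. unfold log_plus.
  eapply Rle_trans. 2: apply ln_ratio_lb; nra.
  apply Rmult_le_reg_l with (2 * (1 + x)). lra.
  replace (2 * (1 + x) * ((1 + x - (1 + p * x)) / (1 + x))) with (2 * (1 - p) * x) by (field; lra).
  replace (2 * (1 + x) * ((1 - p) / 2)) with ((1 - p) * (1 + x)) by field. nra.
Qed.

Lemma lnL_ratio (c x : R) : 0 < c <= 1 -> 0 < x ->
  0 <= ln (log_plus x) - ln (log_plus (c * x)) <= (- ln c) / log_plus (c * x).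
Proof.
  intros Hc Hx.
  assert (Hv : 0 < log_plus (c * x)) by (apply L_pos; nra).
  assert (Hu : log_plus (c * x) <= log_plus x) by (apply L_mono; nra).
  split.
  - pose proof (ln_le _ _ Hv Hu). lra.
  - eapply Rle_trans. apply ln_ratio_ub; lra.
    unfold Rdiv. apply Rmult_le_compat_r. left; apply Rinv_0_lt_compat; lra.
    apply L_diff_ub; lra.
Qed.

Lemma A2 (p s eps : R) : 0 < p -> 0 <= s -> 0 < eps ->
  exists X, forall x, X <= x -> exp (- (p * x)) * exp (s * ln (log_plus x)) <= eps.
Proof.
  intros Hp Hs He.
  set (k := 2 * (s + 1) / p).
  assert (Hk : 0 < k) by (unfold k; apply Rdiv_lt_0_compat; lra).
  set (c := s * Rabs (ln k - 1)).
  assert (Hc : 0 <= c) by (unfold c; pose proof (Rabs_pos (ln k - 1)); nra).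
  exists (Rmax 1 ((p + 2 * c - 2 * ln eps) / p)).
  intros x Hx.
  assert (Hx1 : 1 <= x) by (pose proof (Rmax_l 1 ((p + 2 * c - 2 * ln eps) / p)); lra).
  assert (Hx2 : (p + 2 * c - 2 * ln eps) / p <= x) by (pose proof (Rmax_r 1 ((p + 2 * c - 2 * ln eps) / p)); lra).
  assert (HLp : 0 < log_plus x) by (apply L_pos; lra).
  assert (H1 : ln (log_plus x) <= log_plus x) by (pose proof (ln_le_sub1 _ HLp); lra).
  assert (H2 : log_plus x <= (1 + x) / k + ln k - 1) by (apply ln_tangent; lra).
  assert (H3 : s * ((1 + x) / k) <= p * (1 + x) / 2).
  { unfold k. replace (s * ((1 + x) / (2 * (s + 1) / p))) with (p * (1 + x) / 2 * (s / (s + 1))) by (field; lra).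
    rewrite <- (Rmult_1_r (p * (1 + x) / 2)) at 2. apply Rmult_le_compat_l.
    apply Rlt_le, Rdiv_lt_0_compat; nra.
    apply Rmult_le_reg_l with (s + 1). lra. field_simplify; lra. }
  assert (H4 : s * (ln k - 1) <= c) by (unfold c; pose proof (Rle_abs (ln k - 1)); nra).
  assert (H5 : s * ln (log_plus x) <= p * (1 + x) / 2 + c).
  { apply Rle_trans with (s * log_plus x). apply Rmult_le_compat_l; lra.
    apply Rle_trans with (s * ((1 + x) / k + ln k - 1)). apply Rmult_le_compat_l; lra. nra. }
  assert (H6 : p + 2 * c - 2 * ln eps <= p * x).
  { apply Rmult_le_compat_l with (r := p) in Hx2; [|lra].
    replace (p * ((p + 2 * c - 2 * ln eps) / p)) with (p + 2 * c - 2 * ln eps) in Hx2 by (field; lra). lra. }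
  rewrite <- exp_plus. rewrite <- (exp_ln eps) by lra. apply exp_le. lra.
Qed.

Lemma A1 (eps : R) : 0 < eps ->
  exists X, 1 <= X /\ forall x, X <= x -> ln (log_plus x) <= eps * ln x.
Proof.
  intros He.
  set (k := 2 / eps).
  assert (Hk : 0 < k) by (unfold k; apply Rdiv_lt_0_compat; lra).
  set (c := eps / 2 * ln 2 + ln k - 1).
  exists (Rmax 1 (exp (2 * Rabs c / eps))). split. apply Rmax_l.
  intros x Hx.
  assert (Hx1 : 1 <= x) by (pose proof (Rmax_l 1 (exp (2 * Rabs c / eps))); lra).
  assert (Hx2 : exp (2 * Rabs c / eps) <= x) by (pose proof (Rmax_r 1 (exp (2 * Rabs c / eps))); lra).
  assert (Hlx : 2 * Rabs c / eps <= ln x).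
  { rewrite <- (ln_exp (2 * Rabs c / eps)). apply ln_le. apply exp_pos. lra. }
  assert (HLp : 0 < log_plus x) by (apply L_pos; lra).
  assert (HL2 : log_plus x <= ln 2 + ln x).
  { unfold log_plus. rewrite <- ln_mult by lra. apply ln_le; lra. }
  assert (H2 : ln (log_plus x) <= log_plus x / k + ln k - 1) by (apply ln_tangent; lra).
  assert (H3 : log_plus x / k = eps / 2 * log_plus x) by (unfold k; field; lra).
  assert (H4 : Rabs c <= eps / 2 * ln x).
  { apply Rmult_le_compat_l with (r := eps / 2) in Hlx; [|lra].
    replace (eps / 2 * (2 * Rabs c / eps)) with (Rabs c) in Hlx by (field; lra). lra. }
  pose proof (Rle_abs c). unfold c in *. nra.
Qed.

Lemma exp_lin_lb (a t : R) : exp a * (1 + t) <= exp (a + t).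
Proof. rewrite exp_plus. apply Rmult_le_compat_l. left; apply exp_pos. apply exp_ineq1_le. Qed.

Definition hneg (beta x : R) := 1 - exp ((beta + 1) * ln (1 + log_plus x)).

Lemma hneg_bounds (beta x : R) : beta < -1 -> 0 <= x -> 0 <= hneg beta x <= 1.
Proof.
  intros Hb Hx. unfold hneg. pose proof (exp_pos ((beta + 1) * ln (1 + log_plus x))).
  split; [|lra].
  assert (0 <= ln (1 + log_plus x)).
  { rewrite <- ln_1. apply ln_le. lra. pose proof (L_nonneg x Hx). lra. }
  assert (exp ((beta + 1) * ln (1 + log_plus x)) <= exp 0) by (apply exp_le; nra).
  rewrite exp_0 in H1. lra.
Qed.

Lemma case_neg (p beta : R) : 0 < p -> p <= 1 - p -> beta < -1 ->
  exists r X, 0 < r /\ forall x, X <= x ->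
    hneg beta (p * x) + exp (- (p * x)) * hneg beta ((1 - p) * x)
      + r * exp (beta * ln (log_plus x)) <= hneg beta x.
Proof.
  intros Hp Hpq Hb.
  set (d := - (beta + 1)).
  assert (Hd : 0 < d) by (unfold d; lra).
  set (c := d * ((1 - p) / 2) * exp (- (d + 1) * ln 2)).
  assert (Hc : 0 < c).
  { unfold c. pose proof (exp_pos (- (d + 1) * ln 2)). apply Rmult_lt_0_compat; [|lra].
    apply Rmult_lt_0_compat; lra. }
  destruct (A2 p (- beta) (c / 2) Hp ltac:(lra) ltac:(lra)) as [X2 HX2].
  exists (c / 2), (Rmax (exp 1) X2). split. lra.
  intros x Hx.
  assert (Hx1 : exp 1 <= x) by (pose proof (Rmax_l (exp 1) X2); lra).
  assert (Hx2 : X2 <= x) by (pose proof (Rmax_r (exp 1) X2); lra).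
  assert (He1 : 2 <= exp 1) by (pose proof (exp_ineq1_le 1); lra).
  assert (Hu1 : 1 <= log_plus x) by (apply L_large; lra).
  set (u := log_plus x) in *.
  set (v := log_plus (p * x)).
  assert (Hv0 : 0 <= v) by (apply L_nonneg; nra).
  assert (Huv : (1 - p) / 2 <= u - v) by (apply L_diff_lb; lra).
  assert (Hhq := hneg_bounds beta ((1 - p) * x) Hb ltac:(nra)).
  set (e := exp (- (p * x))) in *.
  assert (He0 : 0 < e) by apply exp_pos.
  specialize (HX2 x Hx2). fold e in HX2. fold u in HX2.
  set (b := exp (beta * ln u)).
  assert (Hb0 : 0 < b) by apply exp_pos.
  assert (Heb : e <= c / 2 * b).
  { replace e with (e * exp (- beta * ln u) * b). 2: { unfold b. rewrite Rmult_assoc, <- exp_plus.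
      replace (- beta * ln u + beta * ln u) with 0 by ring. rewrite exp_0. ring. }
    apply Rmult_le_compat_r; lra. }
  assert (Heh : e * hneg beta ((1 - p) * x) <= e) by nra.
  unfold hneg in Heh |- *. fold u. fold v.
  set (U := 1 + u). set (V := 1 + v).
  assert (HU : 0 < U) by (unfold U; lra). assert (HV : 0 < V) by (unfold V; lra).
  assert (HlnUV : (1 - p) / 2 / U <= ln U - ln V).
  { eapply Rle_trans. 2: apply ln_ratio_lb; lra. unfold Rdiv. apply Rmult_le_compat_r.
    left; apply Rinv_0_lt_compat; lra. unfold U, V; lra. }
  assert (HD : exp ((beta + 1) * ln U) * (d * ((1 - p) / 2 / U)) <= exp ((beta + 1) * ln V) - exp ((beta + 1) * ln U)).
  { pose proof (exp_lin_lb ((beta + 1) * ln U) (d * (ln U - ln V))).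
    replace ((beta + 1) * ln U + d * (ln U - ln V)) with ((beta + 1) * ln V) in H by (unfold d; ring).
    pose proof (exp_pos ((beta + 1) * ln U)).
    assert (d * ((1 - p) / 2 / U) <= d * (ln U - ln V)) by (apply Rmult_le_compat_l; lra).
    nra. }
  assert (HU2 : ln U <= ln 2 + ln u).
  { rewrite <- ln_mult by lra. apply ln_le; unfold U; lra. }
  assert (HcB : c * b <= exp ((beta + 1) * ln U) * (d * ((1 - p) / 2 / U))).
  { unfold c, b.
    replace (exp ((beta + 1) * ln U) * (d * ((1 - p) / 2 / U))) with
      (d * ((1 - p) / 2) * (exp ((beta + 1) * ln U) * / U)) by (field; lra).
    rewrite Rmult_assoc. apply Rmult_le_compat_l.
    apply Rmult_le_pos; lra.
    rewrite <- (exp_ln U) at 2 by lra. rewrite <- exp_Ropp, <- !exp_plus.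
    apply exp_le. unfold d. nra. }
  lra.
Qed.

Lemma case_mid (p beta : R) : 0 < p -> p <= 1 - p -> -1 < beta ->
  exists r X, 0 < r /\ forall x, X <= x ->
    Rpower (log_plus (p * x)) (beta + 1) + exp (- (p * x)) * Rpower (log_plus ((1 - p) * x)) (beta + 1)
      + r * exp (beta * ln (log_plus x)) <= Rpower (log_plus x) (beta + 1).
Proof.
  intros Hp Hpq Hb. unfold Rpower.
  set (g := beta + 1).
  assert (Hg : 0 < g) by (unfold g; lra).
  set (c := g * ((1 - p) / 2) * exp (- g * ln 2)).
  assert (Hc : 0 < c).
  { unfold c. pose proof (exp_pos (- g * ln 2)). apply Rmult_lt_0_compat; [|lra].
    apply Rmult_lt_0_compat; lra. }
  destruct (A2 p 1 (c / 2) Hp ltac:(lra) ltac:(lra)) as [X2 HX2].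
  set (th := - ln p).
  assert (Hth : 0 <= th).
  { unfold th. assert (ln p <= ln 1) by (apply ln_le; lra). rewrite ln_1 in H. lra. }
  exists (c / 2), (Rmax (exp (1 + 2 * th)) X2). split. lra.
  intros x Hx.
  assert (Hx1 : exp (1 + 2 * th) <= x) by (pose proof (Rmax_l (exp (1 + 2 * th)) X2); lra).
  assert (Hx2 : X2 <= x) by (pose proof (Rmax_r (exp (1 + 2 * th)) X2); lra).
  assert (Hex : 1 + (1 + 2 * th) <= exp (1 + 2 * th)) by apply exp_ineq1_le.
  assert (Hu1 : 1 + 2 * th <= log_plus x) by (apply L_large; lra).
  set (u := log_plus x) in *.
  set (v := log_plus (p * x)).
  assert (Hv0 : 0 < v) by (apply L_pos; nra).
  assert (Huv : (1 - p) / 2 <= u - v) by (apply L_diff_lb; lra).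
  assert (Huv2 : u - v <= th) by (apply L_diff_ub; lra).
  set (w := log_plus ((1 - p) * x)).
  assert (Hw0 : 0 < w) by (apply L_pos; nra).
  assert (Hwu : w <= u) by (apply L_mono; nra).
  set (e := exp (- (p * x))) in *.
  assert (He0 : 0 < e) by apply exp_pos.
  specialize (HX2 x Hx2). fold e in HX2. fold u in HX2.
  set (b := exp (beta * ln u)).
  assert (Hb0 : 0 < b) by apply exp_pos.
  assert (Hu0 : 0 < u) by lra.
  assert (Heq : exp (g * ln u) = exp (1 * ln u) * b).
  { unfold b. rewrite <- exp_plus. f_equal. unfold g. ring. }
  assert (Heh : e * exp (g * ln w) <= c / 2 * b).
  { apply Rle_trans with (e * exp (g * ln u)).
    apply Rmult_le_compat_l. lra. apply exp_le. apply Rmult_le_compat_l. lra. apply ln_le; lra.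
    rewrite Heq, <- Rmult_assoc. apply Rmult_le_compat_r; lra. }
  assert (HlnUV : (1 - p) / 2 / u <= ln u - ln v).
  { eapply Rle_trans. 2: apply ln_ratio_lb; lra. unfold Rdiv. apply Rmult_le_compat_r.
    left; apply Rinv_0_lt_compat; lra. lra. }
  assert (HD : exp (g * ln v) * (g * ((1 - p) / 2 / u)) <= exp (g * ln u) - exp (g * ln v)).
  { pose proof (exp_lin_lb (g * ln v) (g * (ln u - ln v))).
    replace (g * ln v + g * (ln u - ln v)) with (g * ln u) in H by ring.
    pose proof (exp_pos (g * ln v)).
    assert (g * ((1 - p) / 2 / u) <= g * (ln u - ln v)) by (apply Rmult_le_compat_l; lra).
    nra. }
  assert (Hvu : ln u - ln 2 <= ln v).
  { assert (H : ln (u * / 2) <= ln v) by (apply ln_le; [apply Rmult_lt_0_compat; lra | lra]).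
    rewrite ln_mult, ln_Rinv in H; lra. }
  assert (HcB : c * b <= exp (g * ln v) * (g * ((1 - p) / 2 / u))).
  { unfold c, b.
    replace (exp (g * ln v) * (g * ((1 - p) / 2 / u))) with
      (g * ((1 - p) / 2) * (exp (g * ln v) * / u)) by (field; lra).
    rewrite Rmult_assoc. apply Rmult_le_compat_l.
    apply Rmult_le_pos; lra.
    rewrite <- (exp_ln u) at 2 by lra. rewrite <- exp_Ropp, <- !exp_plus.
    apply exp_le. unfold g. nra. }
  fold g. lra.
Qed.

Lemma case_m1 (p : R) : 0 < p -> p <= 1 - p ->
  exists r X, 0 < r /\ forall x, X <= x ->
    ln (1 + log_plus (p * x)) + exp (- (p * x)) * ln (1 + log_plus ((1 - p) * x))
      + r * exp (-1 * ln (log_plus x)) <= ln (1 + log_plus x).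
Proof.
  intros Hp Hpq.
  destruct (A2 p 2 ((1 - p) / 16) Hp ltac:(lra) ltac:(lra)) as [X2 HX2].
  exists ((1 - p) / 8), (Rmax (exp 1) X2). split. lra.
  intros x Hx.
  assert (Hx1 : exp 1 <= x) by (pose proof (Rmax_l (exp 1) X2); lra).
  assert (Hx2 : X2 <= x) by (pose proof (Rmax_r (exp 1) X2); lra).
  assert (He1 : 2 <= exp 1) by (pose proof (exp_ineq1_le 1); lra).
  assert (Hu1 : 1 <= log_plus x) by (apply L_large; lra).
  set (u := log_plus x) in *.
  set (v := log_plus (p * x)).
  assert (Hv0 : 0 <= v) by (apply L_nonneg; nra).
  assert (Huv : (1 - p) / 2 <= u - v) by (apply L_diff_lb; lra).
  set (w := log_plus ((1 - p) * x)).
  assert (Hw0 : 0 <= w) by (apply L_nonneg; nra).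
  assert (Hwu : w <= u) by (apply L_mono; nra).
  set (e := exp (- (p * x))) in *.
  assert (He0 : 0 < e) by apply exp_pos.
  specialize (HX2 x Hx2). fold e in HX2. fold u in HX2.
  assert (Hu0 : 0 < u) by lra.
  assert (Hb : exp (-1 * ln u) = / u).
  { replace (-1 * ln u) with (- ln u) by ring. rewrite exp_Ropp, exp_ln; lra. }
  assert (H2 : exp (2 * ln u) = u * u).
  { replace (2 * ln u) with (ln u + ln u) by ring. rewrite exp_plus, exp_ln; lra. }
  rewrite H2 in HX2. rewrite Hb.
  assert (Hhw : ln (1 + w) <= u).
  { apply Rle_trans with (ln (1 + u)). apply ln_le; lra. pose proof (ln_le_sub1 (1 + u)); lra. }
  assert (Heu : e * u <= (1 - p) / 16 / u).
  { apply Rmult_le_reg_l with u. lra. replace (u * ((1 - p) / 16 / u)) with ((1 - p) / 16) by (field; lra).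
    nra. }
  assert (Heh : e * ln (1 + w) <= (1 - p) / 16 / u).
  { eapply Rle_trans. 2: exact Heu. apply Rmult_le_compat_l; lra. }
  assert (HlnUV : (1 - p) / 2 / (1 + u) <= ln (1 + u) - ln (1 + v)).
  { eapply Rle_trans. 2: apply ln_ratio_lb; lra. unfold Rdiv. apply Rmult_le_compat_r.
    left; apply Rinv_0_lt_compat; lra. lra. }
  assert (H4 : (1 - p) / 4 / u <= (1 - p) / 2 / (1 + u)).
  { unfold Rdiv. rewrite !Rmult_assoc. apply Rmult_le_compat_l. lra.
    apply Rmult_le_reg_l with (4 * u * (1 + u)). nra.
    replace (4 * u * (1 + u) * (/ 4 * / u)) with (1 + u) by (field; lra).
    replace (4 * u * (1 + u) * (/ 2 * / (1 + u))) with (2 * u) by (field; lra). lra. }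
  assert (H5 : (1 - p) / 8 * / u = (1 - p) / 8 / u) by reflexivity.
  assert (H6 : (1 - p) / 4 / u = (1 - p) / 16 / u + (1 - p) / 8 / u + (1 - p) / 16 / u) by (field; lra).
  assert (H7 : 0 <= (1 - p) / 16 / u) by (apply Rdiv_le_0_compat; lra).
  lra.
Qed.

Definition hpos (alpha beta x : R) := exp (alpha * ln x + beta * ln (log_plus x)).

Lemma hpos_ratio (alpha beta c x : R) : 0 < c <= 1 -> 0 < x -> 0 <= alpha ->
  hpos alpha beta (c * x) <= exp (alpha * ln c + Rabs beta * ((- ln c) / log_plus (c * x))) * hpos alpha beta x.
Proof.
  intros Hc Hx Ha. unfold hpos. rewrite <- exp_plus. apply exp_le.
  rewrite ln_mult by lra.
  destruct (lnL_ratio c x Hc Hx) as [H1 H2].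
  set (D := ln (log_plus x) - ln (log_plus (c * x))) in *.
  assert (- beta * D <= Rabs beta * D).
  { apply Rmult_le_compat_r; auto. pose proof (Rle_abs (- beta)). rewrite Rabs_Ropp in H. lra. }
  assert (Rabs beta * D <= Rabs beta * ((- ln c) / log_plus (c * x))).
  { apply Rmult_le_compat_l; auto. apply Rabs_pos. }
  unfold D in *. nra.
Qed.

Lemma case_pos (p alpha beta : R) : 0 < p -> p <= 1 - p -> 0 < alpha ->
  exists r X, 0 < r /\ forall x, X <= x ->
    hpos alpha beta (p * x) + exp (- (p * x)) * hpos alpha beta ((1 - p) * x)
      + r * hpos alpha beta x <= hpos alpha beta x.
Proof.
  intros Hp Hpq Ha.
  set (B := Rabs beta). assert (HB : 0 <= B) by apply Rabs_pos.
  set (thp := - ln p). set (thq := - ln (1 - p)).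
  assert (Hthp : 0 < thp).
  { unfold thp. assert (ln p < ln 1) by (apply ln_increasing; lra). rewrite ln_1 in H. lra. }
  assert (Hthq : 0 <= thq).
  { unfold thq. assert (ln (1 - p) <= ln 1) by (apply ln_le; lra). rewrite ln_1 in H. lra. }
  set (rho := exp (alpha / 2 * ln p)).
  assert (Hrho : 0 < rho < 1).
  { split. apply exp_pos. unfold rho. rewrite <- exp_0. apply exp_increasing.
    assert (alpha / 2 * thp > 0) by (apply Rmult_lt_0_compat; lra). unfold thp in H. lra. }
  destruct (A2 p 0 ((1 - rho) / 9) Hp ltac:(lra) ltac:(lra)) as [X2 HX2].
  set (T := (B + 1) * (2 / alpha + thq + 1)).
  exists ((1 - rho) / 3), (Rmax 1 (Rmax (exp T / p) X2)). split. lra.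
  intros x Hx.
  assert (Hx1 : 1 <= x /\ exp T / p <= x /\ X2 <= x).
  { pose proof (Rmax_l 1 (Rmax (exp T / p) X2)). pose proof (Rmax_r 1 (Rmax (exp T / p) X2)).
    pose proof (Rmax_l (exp T / p) X2). pose proof (Rmax_r (exp T / p) X2). lra. }
  destruct Hx1 as [Hx1 [HxT Hx2]].
  assert (HpxT : exp T <= p * x).
  { apply Rmult_le_compat_l with (r := p) in HxT; [|lra].
    replace (p * (exp T / p)) with (exp T) in HxT by (field; lra). exact HxT. }
  assert (HLp : T <= log_plus (p * x)) by (apply L_large; lra).
  assert (HLq : log_plus (p * x) <= log_plus ((1 - p) * x)) by (apply L_mono; nra).
  assert (HTa : 2 * (B + 1) <= alpha * T).
  { unfold T. replace (alpha * ((B + 1) * (2 / alpha + thq + 1))) with (2 * (B + 1) + alpha * (B + 1) * (thq + 1)) by (field; lra).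
    assert (0 <= alpha * (B + 1) * (thq + 1)) by (apply Rmult_le_pos; [apply Rmult_le_pos|]; lra). lra. }
  assert (HTq : B * thq <= T).
  { unfold T. assert (0 <= 2 / alpha) by (apply Rlt_le, Rdiv_lt_0_compat; lra). nra. }
  assert (HT0 : 0 < T).
  { unfold T. assert (0 < 2 / alpha) by (apply Rdiv_lt_0_compat; lra). nra. }
  assert (Hpp := hpos_ratio alpha beta p x ltac:(lra) ltac:(lra) ltac:(lra)).
  fold B thp in Hpp.
  assert (Hpp2 : alpha * ln p + B * (thp / log_plus (p * x)) <= alpha / 2 * ln p).
  { assert (B * (thp / log_plus (p * x)) <= alpha / 2 * thp).
    { unfold Rdiv. rewrite <- Rmult_assoc, (Rmult_comm B thp), Rmult_assoc.
      replace (alpha * / 2 * thp) with (thp * (alpha * / 2)) by ring.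
      apply Rmult_le_compat_l. lra.
      apply Rmult_le_reg_l with (log_plus (p * x)). lra.
      replace (log_plus (p * x) * (B * / log_plus (p * x))) with B by (field; lra). nra. }
    replace (alpha / 2 * ln p) with (alpha * ln p + alpha / 2 * thp) by (unfold thp; field). lra. }
  assert (Hhp : hpos alpha beta (p * x) <= rho * hpos alpha beta x).
  { eapply Rle_trans. exact Hpp. apply Rmult_le_compat_r. unfold hpos; left; apply exp_pos.
    apply exp_le. exact Hpp2. }
  assert (Hqq := hpos_ratio alpha beta (1 - p) x ltac:(lra) ltac:(lra) ltac:(lra)).
  fold B thq in Hqq.
  assert (Hqq2 : alpha * ln (1 - p) + B * (thq / log_plus ((1 - p) * x)) <= 1).
  { assert (B * (thq / log_plus ((1 - p) * x)) <= 1).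
    { unfold Rdiv. rewrite <- Rmult_assoc. apply Rmult_le_reg_l with (log_plus ((1 - p) * x)). lra.
      replace (log_plus ((1 - p) * x) * (B * thq * / log_plus ((1 - p) * x))) with (B * thq) by (field; lra).
      lra. }
    assert (alpha * thq >= 0) by nra.
    replace (alpha * ln (1 - p)) with (- (alpha * thq)) by (unfold thq; ring). lra. }
  assert (Hhq : hpos alpha beta ((1 - p) * x) <= 3 * hpos alpha beta x).
  { eapply Rle_trans. exact Hqq. apply Rmult_le_compat_r. unfold hpos; left; apply exp_pos.
    eapply Rle_trans. apply exp_le. exact Hqq2. apply exp_le_3. }
  specialize (HX2 x Hx2). rewrite Rmult_0_l, exp_0, Rmult_1_r in HX2.
  assert (H0 : 0 < hpos alpha beta x) by apply exp_pos.
  assert (H1 : 0 <= hpos alpha beta ((1 - p) * x)) by (left; apply exp_pos).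
  assert (exp (- (p * x)) * hpos alpha beta ((1 - p) * x) <= (1 - rho) / 9 * (3 * hpos alpha beta x)).
  { apply Rmult_le_compat; try lra. left; apply exp_pos. }
  nra.
Qed.

Lemma Cexp_real (a : R) : Cexp (- RtoC a)%C = RtoC (exp (- a)).
Proof.
  rewrite <- RtoC_opp. unfold Cexp. rewrite re_RtoC, im_RtoC, cos_0, sin_0.
  unfold RtoC. f_equal; ring.
Qed.

Lemma rec_real (p : R) (f g : C -> C) :
  0 < p -> p <= 1 - p ->
  (forall z : C,
      f z = ((1 - Cexp (- (RtoC p * z))) * f (RtoC p * z)
             + Cexp (- (RtoC p * z)) * f (RtoC (1 - p) * z) + g z)%C) ->
  forall x, 0 <= x ->
  Cmod (f (RtoC x)) <= (1 - exp (- (p * x))) * Cmod (f (RtoC (p * x)))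
     + exp (- (p * x)) * Cmod (f (RtoC ((1 - p) * x))) + Cmod (g (RtoC x)).
Proof.
  intros Hp Hpq Hf x Hx.
  rewrite (Hf (RtoC x)).
  rewrite <- !RtoC_mult, Cexp_real.
  assert (He : 0 < exp (- (p * x))) by apply exp_pos.
  assert (He1 : exp (- (p * x)) <= 1).
  { rewrite <- exp_0. apply exp_le. nra. }
  eapply Rle_trans. apply Cmod_triangle.
  apply Rplus_le_compat_r.
  eapply Rle_trans. apply Cmod_triangle.
  rewrite !Cmod_mult, <- RtoC_minus, !Cmod_R.
  rewrite (Rabs_pos_eq (1 - _)) by lra. rewrite (Rabs_pos_eq (exp _)) by lra.
  lra.
Qed.

Lemma RtoC_cont (x : R) : filterlim RtoC (locally x) (@locally (AbsRing_UniformSpace C_AbsRing) (RtoC x)).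
Proof.
  apply (proj2 (@filterlim_locally R (AbsRing_UniformSpace C_AbsRing) (locally x) _ RtoC (RtoC x))); intros eps.
  exists eps; intros y Hy.
  change (Cmod (minus (RtoC y) (RtoC x)) < eps).
  unfold minus, plus, opp; simpl. change (Cmod (RtoC y - RtoC x)%C < eps).
  rewrite <- RtoC_minus, Cmod_R. exact Hy.
Qed.

Lemma F_cont (f : C -> C) : entire f -> forall x : R,
  filterlim (fun x => Cmod (f (RtoC x))) (locally x) (locally (Cmod (f (RtoC x)))).
Proof.
  intros Hf x.
  apply filterlim_comp with (f := fun x => f (RtoC x)) (g := Cmod) (G := @locally C_NormedModule (f (RtoC x))).
  2: { exact (filterlim_norm (K:=C_AbsRing) (V:=C_NormedModule) (f (RtoC x))). }
  eapply filterlim_comp. apply RtoC_cont.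
  exact (ex_derive_continuous f (RtoC x) (Hf _)).
Qed.

Lemma F_bounded (f : C -> C) : entire f -> forall Y, exists M0, 0 <= M0 /\ forall x, 0 <= x <= Y -> Cmod (f (RtoC x)) <= M0.
Proof.
  intros Hf Y.
  destruct (bounded_continuity (V:=R_NormedModule) (fun x => Cmod (f (RtoC x))) 0 Y) as [M HM].
  { intros. apply F_cont; auto. }
  exists (Rmax 0 M). split. apply Rmax_l. intros x Hx.
  specialize (HM x Hx). eapply Rle_trans. 2: apply Rmax_r.
  apply Rlt_le. eapply Rle_lt_trans. 2: exact HM. apply Rle_abs.
Qed.

Lemma master (p : R) (F G h b : R -> R) (K M r X : R) :
  0 < p -> p <= 1 - p ->
  (forall x, 0 <= x -> F x <= (1 - exp (- (p * x))) * F (p * x)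
     + exp (- (p * x)) * F ((1 - p) * x) + G x) ->
  (forall Y, exists M0, 0 <= M0 /\ forall x, 0 <= x <= Y -> F x <= M0) ->
  (forall x, 0 <= x -> 0 <= h x) ->
  (forall x, M <= x -> G x <= K * b x) ->
  (forall x, X <= x -> 0 <= b x) ->
  0 < r ->
  (forall x, X <= x -> h (p * x) + exp (- (p * x)) * h ((1 - p) * x) + r * b x <= h x) ->
  exists A C, 0 <= A /\ 0 <= C /\ forall x, 0 <= x -> F x <= A + C * h x.
Proof.
  intros Hp Hpq Hrec Hbd Hh HG Hb Hr Hin.
  set (x1 := Rmax 1 (Rmax M X)).
  assert (Hx1 : 1 <= x1 /\ M <= x1 /\ X <= x1).
  { unfold x1. pose proof (Rmax_l 1 (Rmax M X)). pose proof (Rmax_r 1 (Rmax M X)).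
    pose proof (Rmax_l M X). pose proof (Rmax_r M X). lra. }
  destruct (Hbd x1) as [M0 [HM0 HM0b]].
  set (C := (Rabs K + r) / r).
  assert (HC : 0 <= C).
  { unfold C. apply Rlt_le, Rdiv_lt_0_compat; auto. pose proof (Rabs_pos K); lra. }
  exists M0, C. split; auto. split; auto.
  set (q := 1 - p).
  assert (Hq : 0 < q < 1) by (unfold q; lra).
  assert (Hind : forall n : nat, forall x, 0 <= x <= x1 * (/ q) ^ n -> F x <= M0 + C * h x).
  { induction n as [|n IH]; intros x [Hx0 Hx].
    - simpl in Hx. rewrite Rmult_1_r in Hx.
      pose proof (HM0b x (conj Hx0 Hx)). pose proof (Hh x Hx0). nra.
    - destruct (Rle_or_lt x x1) as [Hle|Hlt].
      + pose proof (HM0b x (conj Hx0 Hle)). pose proof (Hh x Hx0). nra.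
      + assert (Hqx : q * x <= x1 * (/ q) ^ n).
        { simpl in Hx. 
          assert (q * x <= q * (x1 * (/ q * (/ q) ^ n))) by (apply Rmult_le_compat_l; lra).
          replace (q * (x1 * (/ q * (/ q) ^ n))) with (x1 * (/q)^n) in H by (field; lra).
          lra. }
        assert (Hpx : p * x <= q * x) by (unfold q in *; nra).
        assert (Hpx0 : 0 <= p * x) by nra.
        assert (Hqx0 : 0 <= q * x) by nra.
        assert (Hpx1 : p * x <= x1 * (/ q) ^ n) by lra.
        assert (H1 := IH (p * x) (conj Hpx0 Hpx1)).
        assert (H2 := IH (q * x) (conj Hqx0 Hqx)).
        assert (HMx : M <= x) by lra. assert (HXx : X <= x) by lra. assert (HGx := HG x HMx).
        assert (Hbx := Hb x HXx).
        assert (Hinx := Hin x HXx).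
        assert (Hrecx := Hrec x Hx0).
        fold q in Hrecx, Hinx.
        set (e := exp (- (p * x))) in *.
        assert (He0 : 0 < e) by apply exp_pos.
        assert (He1 : e <= 1) by (unfold e; rewrite <- exp_0; apply exp_le; nra).
        assert (Hhp := Hh (p * x) Hpx0).
        assert (Hhq := Hh (q * x) Hqx0).
        assert (HGC : G x <= C * (r * b x)).
        { unfold C. replace ((Rabs K + r) / r * (r * b x)) with ((Rabs K + r) * b x) by (field; lra).
          pose proof (Rle_abs K). assert (K * b x <= Rabs K * b x) by (apply Rmult_le_compat_r; lra). nra. }
        assert (Hmono : (1 - e) * h (p * x) + e * h (q * x) <= h (p * x) + e * h (q * x)) by nra.
        apply Rle_trans with ((1 - e) * (M0 + C * h (p * x)) + e * (M0 + C * h (q * x)) + G x).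
        { apply Rle_trans with ((1 - e) * F (p * x) + e * F (q * x) + G x); [exact Hrecx|].
          apply Rplus_le_compat_r. apply Rplus_le_compat.
          apply Rmult_le_compat_l; lra. apply Rmult_le_compat_l; lra. }
        assert (C * ((1 - e) * h (p * x) + e * h (q * x)) <= C * (h x - r * b x)).
        { apply Rmult_le_compat_l; lra. }
        nra. }
  intros x Hx.
  destruct (Pow_x_infinity (/ q) ltac:(rewrite Rabs_pos_eq; [ |apply Rlt_le, Rinv_0_lt_compat; lra]; 
       rewrite <- Rinv_1; apply Rinv_lt_contravar; lra) (x / x1)) as [N HN].
  apply (Hind N). split; auto.
  specialize (HN N (le_n _)). rewrite Rabs_pos_eq in HN.
  2: { apply pow_le. apply Rlt_le, Rinv_0_lt_compat; lra. }
  apply Rge_le in HN.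
  assert (x1 * (x / x1) <= x1 * (/ q) ^ N) by (apply Rmult_le_compat_l; lra).
  replace (x1 * (x / x1)) with x in H by (field; lra). exact H.
Qed.

Lemma g0_eq (alpha beta x : R) :
  Rabs (Rpower x alpha * Rpower (log_plus x) beta) = hpos alpha beta x.
Proof.
  unfold Rpower, hpos. rewrite <- exp_plus. apply Rabs_pos_eq. left; apply exp_pos.
Qed.

Lemma finish (F h v : R -> R) (A C k X : R) :
  0 <= A -> 0 <= C -> 0 <= k ->
  (forall x, 0 <= x -> F x <= A + C * h x) ->
  (forall x, 0 <= F x) ->
  (forall x, X <= x -> 1 <= v x /\ h x <= k * v x) ->
  bigO_pinfty F v.
Proof.
  intros HA HC Hk HF HF0 Hv.
  exists (A + C * k), (Rmax 0 X). intros x Hx.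
  assert (H0 : 0 <= x) by (pose proof (Rmax_l 0 X); lra).
  assert (H1 : X <= x) by (pose proof (Rmax_r 0 X); lra).
  destruct (Hv x H1) as [Hv1 Hh].
  rewrite (Rabs_pos_eq (F x)) by auto. rewrite (Rabs_pos_eq (v x)) by lra.
  specialize (HF x H0).
  assert (C * h x <= C * (k * v x)) by (apply Rmult_le_compat_l; auto).
  nra.
Qed.

Theorem mainTheorem9 (p : R) (f g : C -> C) (alpha beta : R) :
  0 < p -> p <= 1 - p ->
  entire f -> entire g ->
  (forall z : C,
      f z = ((1 - Cexp (- (RtoC p * z))) * f (RtoC p * z)
             + Cexp (- (RtoC p * z)) * f (RtoC (1 - p) * z) + g z)%C) ->
  f 0%C = 0%C -> g 0%C = 0%C ->
  bigO_pinfty (fun x => Cmod (g (RtoC x)))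
              (fun x => Rpower x alpha * Rpower (log_plus x) beta) ->
  let F := fun x => Cmod (f (RtoC x)) in
  (0 < alpha ->
     bigO_pinfty F (fun x => Rpower x alpha * Rpower (log_plus x) beta)) /\
  (alpha = 0 -> -1 < beta ->
     bigO_pinfty F (fun x => Rpower (log_plus x) (beta + 1))) /\
  (alpha = 0 -> beta = -1 ->
     bigO_pinfty F (fun x => log_plus (log_plus x))) /\
  (alpha = 0 -> beta < -1 -> bigO_pinfty F (fun _ => 1)) /\
  (alpha < 0 -> bigO_pinfty F (fun _ => 1)).
Proof.
  intros Hp Hpq Hf Hg Hfe Hf0 Hg0 [K [M HKM]] F.
  set (G := fun x => Cmod (g (RtoC x))).
  assert (Hrec : forall x, 0 <= x -> F x <= (1 - exp (- (p * x))) * F (p * x)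
     + exp (- (p * x)) * F ((1 - p) * x) + G x) by (intros; apply rec_real; auto).
  assert (Hbd : forall Y, exists M0, 0 <= M0 /\ forall x, 0 <= x <= Y -> F x <= M0)
    by (apply F_bounded; auto).
  assert (HF0 : forall x, 0 <= F x) by (intros; apply Cmod_ge_0).
  assert (HG : forall x, M <= x -> G x <= K * hpos alpha beta x).
  { intros x Hx. rewrite <- g0_eq. eapply Rle_trans. apply Rle_abs. apply HKM; auto. }
  assert (He1 : 2 <= exp 1) by (pose proof (exp_ineq1_le 1); lra).
  split; [|split; [|split; [|split]]].
  -
    intros Ha.
    destruct (case_pos p alpha beta Hp Hpq Ha) as [r [X [Hr Hin]]].
    destruct (master p F G (hpos alpha beta) (hpos alpha beta) K M r X Hp Hpq Hrec Hbd
      ltac:(intros; left; apply exp_pos) HG ltac:(intros; left; apply exp_pos) Hr Hin)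
      as [A [C [HA [HC HFA]]]].
    destruct (A1 (alpha / (Rabs beta + 1)) ltac:(apply Rdiv_lt_0_compat; pose proof (Rabs_pos beta); lra))
      as [X1 [HX1 HA1]].
    apply (finish F (hpos alpha beta) (fun x => Rpower x alpha * Rpower (log_plus x) beta) A C 1 (Rmax X1 (exp 1))); auto; try lra.
    intros x Hx.
    assert (Hx1 : X1 <= x) by (pose proof (Rmax_l X1 (exp 1)); lra).
    assert (Hx2 : exp 1 <= x) by (pose proof (Rmax_r X1 (exp 1)); lra).
    assert (Heq : Rpower x alpha * Rpower (log_plus x) beta = hpos alpha beta x).
    { unfold Rpower, hpos. rewrite <- exp_plus. reflexivity. }
    rewrite Heq. split; [|lra]. unfold hpos.
    rewrite <- exp_0. apply exp_le.
    specialize (HA1 x Hx1).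
    assert (Hu : 1 <= log_plus x) by (apply L_large; lra).
    assert (Hlu : 0 <= ln (log_plus x)) by (rewrite <- ln_1; apply ln_le; lra).
    assert (Hlx : 0 <= ln x) by (rewrite <- ln_1; apply ln_le; lra).
    set (B := Rabs beta) in *.
    assert (HB : 0 <= B) by apply Rabs_pos.
    assert (Hbb : - beta <= B) by (pose proof (Rle_abs (- beta)); rewrite Rabs_Ropp in H; fold B in H; lra).
    assert (B * ln (log_plus x) <= B * (alpha / (B + 1) * ln x)) by (apply Rmult_le_compat_l; auto).
    assert (B * (alpha / (B + 1) * ln x) <= alpha * ln x).
    { replace (B * (alpha / (B + 1) * ln x)) with (alpha * ln x * (B / (B + 1))) by (field; lra).
      rewrite <- (Rmult_1_r (alpha * ln x)) at 2. apply Rmult_le_compat_l. nra.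
      apply Rmult_le_reg_l with (B + 1). lra. field_simplify; lra. }
    nra.
  -
    intros Ha Hb. subst alpha.
    destruct (case_mid p beta Hp Hpq Hb) as [r [X [Hr Hin]]].
    assert (HG' : forall x, M <= x -> G x <= K * exp (beta * ln (log_plus x))).
    { intros x Hx. specialize (HG x Hx). unfold hpos in HG. rewrite Rmult_0_l, Rplus_0_l in HG. exact HG. }
    destruct (master p F G (fun x => Rpower (log_plus x) (beta + 1)) (fun x => exp (beta * ln (log_plus x)))
      K M r X Hp Hpq Hrec Hbd
      ltac:(intros; left; apply exp_pos) HG' ltac:(intros; left; apply exp_pos) Hr Hin)
      as [A [C [HA [HC HFA]]]].
    apply (finish F (fun x => Rpower (log_plus x) (beta + 1)) (fun x => Rpower (log_plus x) (beta + 1)) A C 1 (exp 1)); auto; try lra.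
    intros x Hx. simpl. split; [|lra].
    assert (Hu : 1 <= log_plus x) by (apply L_large; lra).
    assert (Hlu : 0 <= ln (log_plus x)) by (rewrite <- ln_1; apply ln_le; lra).
    unfold Rpower. apply Rle_trans with (exp 0). rewrite exp_0; lra. apply exp_le. nra.
  -
    intros Ha Hb. subst alpha beta.
    destruct (case_m1 p Hp Hpq) as [r [X [Hr Hin]]].
    assert (HG' : forall x, M <= x -> G x <= K * exp (-1 * ln (log_plus x))).
    { intros x Hx. specialize (HG x Hx). unfold hpos in HG. rewrite Rmult_0_l, Rplus_0_l in HG. exact HG. }
    destruct (master p F G (fun x => ln (1 + log_plus x)) (fun x => exp (-1 * ln (log_plus x)))
      K M r X Hp Hpq Hrec Hbd
      ltac:(intros; rewrite <- ln_1; apply ln_le; [lra|]; pose proof (L_nonneg x H); lra)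
      HG' ltac:(intros; left; apply exp_pos) Hr Hin)
      as [A [C [HA [HC HFA]]]].
    apply (finish F (fun x => ln (1 + log_plus x)) (fun x => log_plus (log_plus x)) A C 2 (exp 3)); auto; try lra.
    intros x Hx. simpl.
    assert (Hu : 3 <= log_plus x) by (apply L_large; lra).
    assert (Hl3 : 1 <= ln (1 + log_plus x)).
    { apply Rle_trans with (ln (exp 1)). rewrite ln_exp; lra. apply ln_le. apply exp_pos. pose proof exp_le_3. lra. }
    change (log_plus (log_plus x)) with (ln (1 + log_plus x)). split. exact Hl3. lra.
  -
    intros Ha Hb. subst alpha.
    destruct (case_neg p beta Hp Hpq Hb) as [r [X [Hr Hin]]].
    assert (HG' : forall x, M <= x -> G x <= K * exp (beta * ln (log_plus x))).
    { intros x Hx. specialize (HG x Hx). unfold hpos in HG. rewrite Rmult_0_l, Rplus_0_l in HG. exact HG. }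
    destruct (master p F G (hneg beta) (fun x => exp (beta * ln (log_plus x)))
      K M r X Hp Hpq Hrec Hbd
      ltac:(intros; apply hneg_bounds; auto)
      HG' ltac:(intros; left; apply exp_pos) Hr Hin)
      as [A [C [HA [HC HFA]]]].
    apply (finish F (fun x => hneg beta x) (fun _ => 1) A C 1 0); auto; try lra.
    intros x Hx. split. lra. pose proof (hneg_bounds beta x Hb Hx). lra.
  -
    intros Ha.
    destruct (case_neg p (-2) Hp Hpq ltac:(lra)) as [r [X [Hr Hin]]].
    destruct (A1 (- alpha / (Rabs beta + 2)) ltac:(apply Rdiv_lt_0_compat; pose proof (Rabs_pos beta); lra))
      as [X1 [HX1 HA1]].
    assert (HG' : forall x, Rmax M (Rmax X1 (exp 1)) <= x -> G x <= Rabs K * exp (-2 * ln (log_plus x))).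
    { intros x Hx.
      assert (Hx0 : M <= x /\ X1 <= x /\ exp 1 <= x).
      { pose proof (Rmax_l M (Rmax X1 (exp 1))). pose proof (Rmax_r M (Rmax X1 (exp 1))).
        pose proof (Rmax_l X1 (exp 1)). pose proof (Rmax_r X1 (exp 1)). lra. }
      destruct Hx0 as [HxM [HxX1 Hxe]].
      specialize (HG x HxM). specialize (HA1 x HxX1).
      assert (Hh0 : 0 <= hpos alpha beta x) by (left; apply exp_pos).
      assert (HKK : K * hpos alpha beta x <= Rabs K * hpos alpha beta x)
        by (apply Rmult_le_compat_r; auto; apply Rle_abs).
      assert (Hhh : hpos alpha beta x <= exp (-2 * ln (log_plus x))).
      { unfold hpos. apply exp_le.
        assert (Hu : 1 <= log_plus x) by (apply L_large; lra).
        assert (Hlu : 0 <= ln (log_plus x)) by (rewrite <- ln_1; apply ln_le; lra).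
        assert (Hlx : 0 <= ln x) by (rewrite <- ln_1; apply ln_le; lra).
        set (B := Rabs beta) in *.
        assert (HB : 0 <= B) by apply Rabs_pos.
        assert (Hbb : beta <= B) by apply Rle_abs.
        assert ((B + 2) * ln (log_plus x) <= (B + 2) * (- alpha / (B + 2) * ln x)) by (apply Rmult_le_compat_l; lra).
        replace ((B + 2) * (- alpha / (B + 2) * ln x)) with (- alpha * ln x) in H by (field; lra).
        nra. }
      assert (Rabs K * hpos alpha beta x <= Rabs K * exp (-2 * ln (log_plus x)))
        by (apply Rmult_le_compat_l; auto; apply Rabs_pos).
      lra. }
    destruct (master p F G (hneg (-2)) (fun x => exp (-2 * ln (log_plus x)))
      (Rabs K) (Rmax M (Rmax X1 (exp 1))) r X Hp Hpq Hrec Hbd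
      ltac:(intros; apply hneg_bounds; auto; lra)
      HG' ltac:(intros; left; apply exp_pos) Hr Hin)
      as [A [C [HA [HC HFA]]]].
    apply (finish F (fun x => hneg (-2) x) (fun _ => 1) A C 1 0); auto; try lra.
    intros x Hx. split. lra. pose proof (hneg_bounds (-2) x ltac:(lra) Hx). lra.
Qed.
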